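(* Assume $M$ is projective in $\sigma[M]$ and let $X\in\sigma[M]$ with $X=\bigoplus_{\lambda\in\Lambda}X_\lambda$ an internal direct sum of submodules $X_\lambda$. Then for every submodule $N\le M$, $N\cdot X=\bigoplus_{\lambda\in\Lambda}N\cdot X_\lambda$.
   Context: $R$ is a ring with identity, modules are unital left $R$-modules, $M$ is a fixed left $R$-module; $\sigma[M]$ is the full subcategory of $R$-modules isomorphic to submodules of $M$-generated modules. For $N\le M$ and a module $X$, $N\cdot X$ is the intersection of the kernels of all homomorphisms $X\to W$ where $W$ ranges over modules with $f(N)=0$ for all $f\in\mathrm{Hom}_R(M,W)$; for a submodule $X_\lambda$ of $X$, $N\cdot X_\lambda$ is formed regarding $X_\lambda$ as a module. *)

(* Defs.v *)
(* left R-modules are [lmodType R], homomorphisms are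
   [{linear U -> V}] (R-linear maps). Submodules are represented as
   predicates closed under the module operations. *)
From HB Require Import structures.
From mathcomp Require Import all_boot all_order all_algebra.
From Stdlib Require List.
Set Implicit Arguments. Unset Strict Implicit. Unset Printing Implicit Defensive.
Import GRing.Theory.
Local Open Scope ring_scope.

Section ModDefs.
Variable R : pzRingType.

Definition is_submod (V : lmodType R) (P : V -> Prop) : Prop :=
  [/\ P 0, (forall x y, P x -> P y -> P (x + y)) &
      (forall (r : R) x, P x -> P (r *: x))].

(* Restriction of a map to a submodule P is R-linear: such maps
   g : V -> W are exactly (extensions of) homomorphisms P -> W,
   where P is regarded as a module. *)
Definition linear_on (V W : lmodType R) (P : V -> Prop) (g : V -> W) : Prop :=
  (forall x y, P x -> P y -> g (x + y) = g x + g y) /\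
  (forall (r : R) x, P x -> g (r *: x) = r *: g x).

Definition annihil_by (M : lmodType R) (N : M -> Prop) (W : lmodType R) : Prop :=
  forall (f : {linear M -> W}) (n : M), N n -> f n = 0.

(* N . X_P  for a submodule P of X (regarded as a module):
   intersection of kernels of all homomorphisms P -> W with W annihilated by N. *)
Definition trace_dot_sub (M : lmodType R) (N : M -> Prop)
    (X : lmodType R) (P : X -> Prop) : X -> Prop :=
  fun x => P x /\
    forall (W : lmodType R), annihil_by N W ->
      forall g : X -> W, linear_on P g -> g x = 0.

(* N . X  for a module X: intersection of kernels of all homomorphisms X -> W *)
Definition trace_dot (M : lmodType R) (N : M -> Prop) (X : lmodType R) : X -> Prop :=
  fun x => forall (W : lmodType R), annihil_by N W ->
      forall g : {linear X -> W}, g x = 0.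

(* Y is M-generated: there is an epimorphism M^(L) -> Y, i.e. a family
   (f_l)_{l in L} of homomorphisms M -> Y such that every y is a finite
   sum  f_{l1}(m1) + ... + f_{lk}(mk). *)
Definition M_generated (M Y : lmodType R) : Prop :=
  exists (L : Type) (f : L -> {linear M -> Y}),
    forall y : Y, exists s : seq (L * M), y = \sum_(p <- s) f p.1 p.2.

Definition in_sigma (M X : lmodType R) : Prop :=
  exists (Y : lmodType R) (i : {linear X -> Y}), M_generated M Y /\ injective i.

Definition projective_in_sigma (M : lmodType R) : Prop :=
  forall (A B : lmodType R) (g : {linear A -> B}) (f : {linear M -> B}),
    in_sigma M A -> in_sigma M B -> (forall b : B, exists a, g a = b) ->
    exists h : {linear M -> A}, forall m, g (h m) = f m.

Definition internal_dsum (X : lmodType R) (L : Type) (P : X -> Prop)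
    (Xs : L -> X -> Prop) : Prop :=
  [/\ forall l, is_submod (Xs l),
      (forall x, P x <-> exists s : seq (L * X),
          (forall p, List.In p s -> Xs p.1 p.2) /\ x = \sum_(p <- s) p.2) &
      (forall l v, Xs l v ->
          forall s : seq (L * X),
            (forall p, List.In p s -> Xs p.1 p.2 /\ p.1 <> l) ->
            v = \sum_(p <- s) p.2 -> v = 0)].

End ModDefs.

(* Main.v *)
Require Import Defs.
From HB Require Import structures.
From mathcomp Require Import all_boot all_order all_algebra.
From Stdlib Require Import ClassicalEpsilon.
From Stdlib Require List.
Import GRing.Theory.
Local Open Scope ring_scope.

Definition mkLin {R : pzRingType} {X W : lmodType R} {f : X -> W}
  (Hf : forall (a : R) x y, f (a *: x + y) = a *: f x + f y) : {linear X -> W} :=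
  HB.pack f (GRing.isLinear.Build R X W *:%R f Hf).

Definition peq {L : Type} (l l' : L) : bool :=
  if excluded_middle_informative (l = l') then true else false.

Lemma peqP {L : Type} (l l' : L) : reflect (l = l') (peq l l').
Proof. rewrite /peq; case: excluded_middle_informative => h; by constructor. Qed.

Lemma In_filter {T : Type} {a : pred T} {s : seq T} {p} :
  List.In p (filter a s) -> List.In p s /\ a p.
Proof.
elim: s => [|q s IH] //=; case: ifP => aq /=.
  by case=> [<-|/IH [h1 h2]]; [split; [left|] | split; [right|]].
by move=> /IH [h1 h2]; split; [right|].
Qed.

Lemma In_map {T U : Type} {f : T -> U} {s : seq T} {p} :
  List.In p (map f s) -> exists q, List.In q s /\ p = f q.
Proof.
elim: s => [|q s IH] //=; case=> [<-|/IH [r [h1 h2]]].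
  by exists q; split; [left|].
by exists r; split; [right|].
Qed.

Lemma In_cat {T : Type} {s t : seq T} {p} :
  List.In p (s ++ t) -> List.In p s \/ List.In p t.
Proof. elim: s => [|q s IH] /=; first by right. by case=> [->|/IH[]]; auto. Qed.

Lemma sum_in {R : pzRingType} {X : lmodType R} {P : X -> Prop} {T : Type}
  {s : seq T} {Q : pred T} {F : T -> X} :
  is_submod P -> (forall p, List.In p s -> Q p -> P (F p)) ->
  P (\sum_(p <- s | Q p) F p).
Proof.
case=> P0 PD PZ; elim: s => [|q s IH] H; first by rewrite big_nil.
rewrite big_cons; have IH' : P (\sum_(p <- s | Q p) F p).
  by apply: IH => p hp; apply: H; right.
case: ifP => // Qq; apply: PD => //; apply: H => //; by left.
Qed.

Section Proj.
Variables (R : pzRingType) (X : lmodType R) (L : Type) (Xs : L -> X -> Prop).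
Hypothesis H1 : forall l, is_submod (Xs l).
Hypothesis H2 : forall x : X, True <-> exists s : seq (L * X),
          (forall p, List.In p s -> Xs p.1 p.2) /\ x = \sum_(p <- s) p.2.
Hypothesis H3 : forall l v, Xs l v ->
          forall s : seq (L * X),
            (forall p, List.In p s -> Xs p.1 p.2 /\ p.1 <> l) ->
            v = \sum_(p <- s) p.2 -> v = 0.

Definition valid (s : seq (L * X)) := forall p, List.In p s -> Xs p.1 p.2.
Definition comp l (s : seq (L * X)) := \sum_(p <- s | peq p.1 l) p.2.

Lemma comp_in l s : valid s -> Xs l (comp l s).
Proof.
move=> hs; apply: sum_in => // p hp /peqP <-; exact: hs.
Qed.

Lemma split_sum l s : \sum_(p <- s) p.2 = comp l s + \sum_(p <- s | ~~ peq p.1 l) p.2.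
Proof. by rewrite (bigID (fun p : L * X => peq p.1 l)). Qed.

Lemma Xs_opp l y : Xs l y -> Xs l (- y).
Proof. case: (H1 l) => _ _ hz hy; rewrite -scaleN1r; exact: hz. Qed.

Lemma uniq_comp l s t : valid s -> valid t ->
  \sum_(p <- s) p.2 = \sum_(p <- t) p.2 -> comp l s = comp l t.
Proof.
move=> hs ht e; apply/eqP; rewrite -subr_eq0; apply/eqP.
set u := filter (fun p : L * X => ~~ peq p.1 l) t ++
         map (fun p : L * X => (p.1, - p.2)) (filter (fun p : L * X => ~~ peq p.1 l) s).
have hv : Xs l (comp l s - comp l t).
  case: (H1 l) => _ hD _; apply: hD; first exact: comp_in.
  apply: Xs_opp; exact: comp_in.
apply: (H3 _ _ hv u).
- move=> p /In_cat [/In_filter [h1 /peqP h2]|/In_map [q [/In_filter [h1 /peqP h2] ->]]].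
    by split => //; apply: ht.
  by split => //=; apply: Xs_opp; apply: hs.
- rewrite big_cat /= big_map /= !big_filter sumrN.
  move: e; rewrite (split_sum l s) (split_sum l t) => e.
  set a := comp l s in e *; set c := comp l t in e *.
  set b := \sum_(p <- s | _) _ in e *; set d := \sum_(p <- t | _) _ in e *.
  have -> : a = c + d - b by rewrite -e addrK.
  by rewrite addrAC [c + d]addrC addrK.

Qed.

Definition dec (x : X) : {s : seq (L * X) | valid s /\ x = \sum_(p <- s) p.2} :=
  constructive_indefinite_description _ (proj1 (H2 x) I).

Definition pi l (x : X) : X := comp l (proj1_sig (dec x)).

Lemma pi_spec l x s : valid s -> x = \sum_(p <- s) p.2 -> pi l x = comp l s.
Proof.
move=> hs ex; rewrite /pi; case: (dec x) => t [ht et] /=.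
apply: uniq_comp => //; by rewrite -et -ex.
Qed.

Lemma pi_in l x : Xs l (pi l x).
Proof. rewrite /pi; case: (dec x) => t [ht et] /=; exact: comp_in. Qed.

Lemma pi_lin l (a : R) x y : pi l (a *: x + y) = a *: pi l x + pi l y.
Proof.
case: (dec x) => s [hs es]; case: (dec y) => t [ht et].
rewrite (pi_spec l _ _ hs es) (pi_spec l _ _ ht et).
set s' := map (fun p : L * X => (p.1, a *: p.2)) s.
have hv : valid (s' ++ t).
  move=> p /In_cat [/In_map [q [hq ->]]|hp]; last exact: ht.
  by case: (H1 q.1) => _ _ hz; apply: hz; apply: hs.
rewrite (pi_spec l _ _ hv); last by rewrite big_cat /= big_map /= es et scaler_sumr.
by rewrite /comp big_cat /= big_map /= scaler_sumr.
Qed.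

End Proj.

Arguments valid {R X L} Xs s.
Arguments comp {R X L} l s.
Arguments split_sum {R X L} l s.
Arguments pi {R X L Xs} H2 l x.
Arguments pi_in {R X L Xs} H1 H2 l x.
Arguments pi_lin {R X L Xs} H1 H2 H3 l a x y.
Arguments pi_spec {R X L Xs} H1 H2 H3 l x s.
Section Main.
Variables (R : pzRingType) (X : lmodType R) (L : Type) (Xs : L -> X -> Prop).
Variables (M : lmodType R) (N : M -> Prop).
Hypothesis H1 : forall l, is_submod (Xs l).
Hypothesis H2 : forall x : X, True <-> exists s : seq (L * X),
          (forall p, List.In p s -> Xs p.1 p.2) /\ x = \sum_(p <- s) p.2.
Hypothesis H3 : forall l v, Xs l v ->
          forall s : seq (L * X),
            (forall p, List.In p s -> Xs p.1 p.2 /\ p.1 <> l) ->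
            v = \sum_(p <- s) p.2 -> v = 0.

Lemma lin_on_all (W : lmodType R) (P : X -> Prop) (g : {linear X -> W}) :
  linear_on P g.
Proof. by split => *; [rewrite linearD | rewrite linearZ]. Qed.

Lemma td_sub_td l y : trace_dot_sub N (Xs l) y -> @trace_dot R M N X y.
Proof. by case=> _ hy W hW g; apply: hy => //; apply: lin_on_all. Qed.

Lemma key l x : @trace_dot R M N X x -> trace_dot_sub N (Xs l) (pi H2 l x).
Proof.
move=> hx; split; first exact: (pi_in H1 H2).
move=> W hW g [gD gZ].
have Hf : forall (a : R) u v, g (pi H2 l (a *: u + v)) =
    a *: g (pi H2 l u) + g (pi H2 l v).
  move=> a u v; rewrite (pi_lin H1 H2 H3) gD; last exact: (pi_in H1 H2).
    by rewrite gZ //; exact: (pi_in H1 H2).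
  by case: (H1 l) => _ _ hz; apply: hz; exact: (pi_in H1 H2).
exact (hx W hW (mkLin (f := fun z => g (pi H2 l z)) Hf)).
Qed.

Lemma decomp_ind n : forall s x, (size s <= n)%N -> valid Xs s -> x = \sum_(p <- s) p.2 ->
  @trace_dot R M N X x ->
  exists s', (forall p, List.In p s' -> trace_dot_sub N (Xs p.1) p.2) /\
             x = \sum_(p <- s') p.2.
Proof.
elim: n => [|n IH] s x hsz hv ex hx.
  case: s hsz hv ex => // _ _ ->; exists [::]; split => //; by rewrite big_nil.
case: s hsz hv ex => [|p t] hsz hv ex.
  by exists [::]; split => //; rewrite ex.
set l := p.1.
have hy := key l _ hx.
set t' := filter (fun q : L * X => ~~ peq q.1 l) t.
have ht' : valid Xs t'.
  by move=> q /In_filter [hq _]; apply: hv; right.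
have hll : peq l l by apply/peqP.
have exy : x - pi H2 l x = \sum_(q <- t') q.2.
  rewrite (pi_spec H1 H2 H3 l _ _ hv ex) ex (split_sum l (p :: t)) addrC addKr.
  by rewrite big_cons hll /= big_filter.
have hxy : @trace_dot R M N X (x - pi H2 l x).
  by move=> W hW g; rewrite linearB (hx W hW g) (td_sub_td _ _ hy W hW g) subrr.
have hsz' : (size t' <= n)%N.
  by rewrite /t' size_filter; apply: leq_trans (count_size _ _) _.
have [s'' [h1 h2]] := IH t' _ hsz' ht' exy hxy.
exists ((l, pi H2 l x) :: s''); split.
  by move=> q [<-|hq] //; apply: h1.
by rewrite big_cons -h2 addrC subrK.
Qed.

Lemma td_sum s : (forall p, List.In p s -> trace_dot_sub N (Xs p.1) p.2) ->
  @trace_dot R M N X (\sum_(p <- s) p.2).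
Proof.
elim: s => [|p s IH] hs W hW g.
  by rewrite big_nil linear0.
rewrite big_cons linearD (IH _ W hW g); last by move=> q hq; apply: hs; right.
rewrite ((hs p (or_introl erefl)).2 W hW g) ?addr0 //; exact: lin_on_all.
Qed.

Lemma tds_submod l : is_submod (trace_dot_sub N (Xs l)).
Proof.
case: (H1 l) => h0 hD hZ; split.
- split => // W hW g [gD gZ].
  have := gD 0 0 h0 h0; rewrite addr0 => e.
  have : g 0 + 0 = g 0 + g 0 by rewrite addr0.
  by move/addrI => <-.
- move=> x y [hx gx] [hy gy]; split; first exact: hD.
  move=> W hW g hg; rewrite hg.1 // (gx W hW g hg) (gy W hW g hg) addr0 //.
- move=> r x [hx gx]; split; first exact: hZ.
  move=> W hW g hg; rewrite hg.2 // (gx W hW g hg) scaler0 //.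
Qed.

End Main.

Theorem lemma2p29 (R : pzRingType) (M : lmodType R) (X : lmodType R)
    (L : Type) (Xs : L -> X -> Prop) (N : M -> Prop) :
  projective_in_sigma M ->
  in_sigma M X ->
  internal_dsum (fun _ : X => True) Xs ->
  is_submod N ->
  internal_dsum (@trace_dot R M N X) (fun l => trace_dot_sub N (Xs l)).
Proof.
move=> _ _ [H1 H2 H3] _; split.
- move=> l; exact: tds_submod.
- move=> x; split.
    move=> hx; have [s [hs ex]] := proj1 (H2 x) I.
    exact: (@decomp_ind _ _ _ _ _ _ H1 H2 H3 (size s) s x (leqnn _) hs ex hx).
  case=> s [hs ->]; exact: (@td_sum _ _ _ _ _ N s hs).
- move=> l v hv s hs ev; apply: (H3 l v hv.1 s) => // p hp.
  by case: (hs p hp) => [[h _] h']; split.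
Qed.
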